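(* (1) In ordinary cohomology and in $K$-theory (setups below), for all $v,w\in W$, $$\widetilde\zeta_{vw_\circ}(ww_\circ)=\psi^v(w).$$ (2) In $K$-theory, for all $v,w\in W$, $$\zeta_{vw_\circ}(ww_\circ)=\xi^v(w).$$
   Context: Let $\Phi$ be a finite root system with weight lattice $\Lambda$, positive roots $\Phi^+$, negative roots $\Phi^-$, simple roots $\alpha_1,\dots,\alpha_n$, simple reflections $s_i$, Weyl group $W$ with length $\ell$, Bruhat order $\le$, longest element $w_\circ$. Ordinary cohomology setup: $S$ is the completion of the symmetric algebra $\mathrm{Sym}_{\mathbb Z}(\Lambda)$ and $x_\lambda:=-\lambda$. $K$-theory setup: $S$ is the completion of the group ring $\mathbb Z[\Lambda]=\mathbb Z\{e^\lambda\}$ and $x_\lambda:=1-e^{-\lambda}$. In both cases $W$ acts naturally on $S$, and we consider functions $f:W\to\mathrm{Frac}(S)$ with operators $$(X_if)(w)=\frac{f(ws_i)-f(w)}{x_{w\alpha_i}},\qquad (Y_if)(w)=\frac{f(w)}{x_{-w\alpha_i}}+\frac{f(ws_i)}{x_{w\alpha_i}}.$$ Let $\zeta_\emptyset(w)=\prod_{\alpha\in\Phi^+}x_{-\alpha}$ if $w=\mathrm{id}$ and $\zeta_\emptyset(w)=0$ otherwise. For $u\in W$ with reduced word $(i_1,\dots,i_l)$ put $\widetilde\zeta_u:=X_{i_l}\cdots X_{i_1}\zeta_\emptyset$ and $\zeta_u:=Y_{i_l}\cdots Y_{i_1}\zeta_\emptyset$ (these do not depend on the reduced word in these two setups). Kostant–Kumar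 functions. In cohomology, $\{\psi^v:W\to S\}_{v\in W}$ is the unique family with: (H1) $\psi^v(w)=0$ unless $v\le w$, and $\psi^w(w)=\prod_{\alpha\in\Phi^+\cap w\Phi^-}\alpha$; (H2) with $(A_if)(w)=\frac{f(w)-f(ws_i)}{-w\alpha_i}$, one has $A_i\psi^v=\psi^{vs_i}$ if $vs_i<v$ and $A_i\psi^v=0$ if $vs_i>v$. In $K$-theory, $\{\psi^v\}$ is the unique family with: (K1) $\psi^v(w)=0$ unless $v\le w$, and $\psi^w(w)=\prod_{\alpha\in\Phi^+\cap w\Phi^-}(1-e^{\alpha})$; (K2) with $(D_if)(w)=\frac{f(w)-e^{-w\alpha_i}f(ws_i)}{1-e^{-w\alpha_i}}$, one has $D_i\psi^v=\psi^v+\psi^{vs_i}$ if $vs_i<v$ and $D_i\psi^v=0$ if $vs_i>v$. Also in $K$-theory, $\{\xi^v\}$ is the unique family satisfying (K1) (with $\xi$ in place of $\psi$) and $D_i\xi^v=\xi^{vs_i}$ if $vs_i<v$, $D_i\xi^v=\xi^v$ if $vs_i>v$. *)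

(* Defs.v *)
From HB Require Import structures.
From mathcomp Require Import all_boot all_order all_algebra.
Set Implicit Arguments. Unset Strict Implicit. Unset Printing Implicit Defensive.
Import Order.TTheory GRing.Theory Num.Theory.
Local Open Scope ring_scope.

(* The root datum.  A finite (reduced, crystallographic) root system of rank *)
(* n is given by its Cartan matrix A (A i j = <alpha_i^vee, alpha_j>).       *)
(* The weight lattice Lambda is Z^n in the basis of fundamental weights      *)
(* (column vectors 'cV[int]_n); the i-th coordinate of lambda is             *)
(* <alpha_i^vee, lambda>.  The simple root alpha_j is the j-th column of A. *)
(* Weyl group elements are the integer matrices acting on Lambda (on the     *)
(* left) that are products of simple reflections.                           *)

Definition gen_cartan (n : nat) (A : 'M[int]_n) : Prop :=
  [/\ (forall i, A i i = 2),
      (forall i j, i != j -> A i j <= 0) &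
      (forall i j, A i j = 0 -> A j i = 0)].

Definition alpha (n : nat) (A : 'M[int]_n) (i : 'I_n) : 'cV[int]_n := col i A.

(* s_i(lambda) = lambda - <alpha_i^vee, lambda> alpha_i *)
Definition sref (n : nat) (A : 'M[int]_n) (i : 'I_n) : 'M[int]_n :=
  1%:M - alpha A i *m delta_mx (0 : 'I_1) i.

Definition prodw (n : nat) (A : 'M[int]_n) (word : seq 'I_n) : 'M[int]_n :=
  foldr (fun i M => sref A i *m M) 1%:M word.

Definition inW (n : nat) (A : 'M[int]_n) (M : 'M[int]_n) : Prop :=
  exists word, prodw A word = M.

Definition weyl_finite (n : nat) (A : 'M[int]_n) : Prop :=
  exists L : seq 'M[int]_n, forall M, inW A M -> M \in L.

Definition is_length (n : nat) (A : 'M[int]_n) (M : 'M[int]_n) (k : nat) : Prop :=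
  (exists word, size word = k /\ prodw A word = M) /\
  (forall word, prodw A word = M -> (k <= size word)%N).

Definition len_lt (n : nat) (A : 'M[int]_n) (u v : 'M[int]_n) : Prop :=
  exists k k', [/\ is_length A u k, is_length A v k' & (k < k')%N].

Definition reduced_word (n : nat) (A : 'M[int]_n) (word : seq 'I_n) (u : 'M[int]_n) : Prop :=
  prodw A word = u /\ (forall word', prodw A word' = u -> (size word <= size word')%N).

Definition is_reflection (n : nat) (A : 'M[int]_n) (t : 'M[int]_n) : Prop :=
  exists w w' i, [/\ inW A w, inW A w', w *m w' = 1%:M & t = w *m sref A i *m w'].

Inductive bruhat_le (n : nat) (A : 'M[int]_n) : 'M[int]_n -> 'M[int]_n -> Prop :=
| bruhat_refl u : inW A u -> bruhat_le A u u
| bruhat_step u v t : bruhat_le A u v -> is_reflection A t ->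
    len_lt A v (v *m t) -> bruhat_le A u (v *m t).

Definition bruhat_lt (n : nat) (A : 'M[int]_n) (u v : 'M[int]_n) : Prop :=
  bruhat_le A u v /\ u <> v.

Definition is_longest (n : nat) (A : 'M[int]_n) (w0 : 'M[int]_n) : Prop :=
  inW A w0 /\ forall w k k0, inW A w -> is_length A w k -> is_length A w0 k0 -> (k <= k0)%N.

Definition is_root (n : nat) (A : 'M[int]_n) (a : 'cV[int]_n) : Prop :=
  exists w i, inW A w /\ a = w *m alpha A i.

Definition is_pos_root (n : nat) (A : 'M[int]_n) (a : 'cV[int]_n) : Prop :=
  is_root A a /\ exists c : 'I_n -> nat, a = \sum_i (c i)%:Z *: alpha A i.

Definition enum_pos (n : nat) (A : 'M[int]_n) (posl : seq 'cV[int]_n) : Prop :=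
  uniq posl /\ forall a, a \in posl <-> is_pos_root A a.

(* Phi^+ \cap w Phi^-  (alpha = w beta, beta = - gamma, gamma in Phi^+) *)
Definition inv_list (n : nat) (posl : seq 'cV[int]_n) (w : 'M[int]_n) : seq 'cV[int]_n :=
  [seq a <- posl | has (fun g => w *m g == - a) posl].

(* Coefficients.  Sym_Z(Lambda) = Z[t_0..t_{n-1}], Z[Lambda] =               *)
(* Z[t_0^{+-1}..], both having fraction field Frac(mpoly n); t_i corresponds *)
(* to the fundamental weight omega_i (resp. e^{omega_i}).                    *)

Fixpoint mpoly (k : nat) : idomainType :=
  match k with
  | 0 => int
  | k'.+1 => {poly (mpoly k')}
  end.

Fixpoint tvar (k : nat) : nat -> mpoly k :=
  match k return nat -> mpoly k with
  | 0 => fun _ => 0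
  | k'.+1 => fun j => if j == k' then ('X : {poly (mpoly k')}) else (tvar k' j)%:P
  end.

Definition FracS (n : nat) : fieldType := {fraction (mpoly n)}.

Definition tF (n : nat) (i : 'I_n) : FracS n := FracField.tofrac (tvar n i).

Definition lamH (n : nat) (l : 'cV[int]_n) : FracS n :=
  \sum_i (l i 0)%:~R * tF i.

Definition expL (n : nat) (l : 'cV[int]_n) : FracS n :=
  \prod_i (tF i) ^ (l i 0).

Definition xH (n : nat) (l : 'cV[int]_n) : FracS n := - lamH l.
Definition xK (n : nat) (l : 'cV[int]_n) : FracS n := 1 - expL (- l).

(* functions W -> Frac(S) are represented as functions on 'M[int]_n,
   only their values on W matter. *)
Definition Wfun (n : nat) := 'M[int]_n -> FracS n.

Definition Xop (n : nat) (A : 'M[int]_n) (x : 'cV[int]_n -> FracS n)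
  (i : 'I_n) (f : Wfun n) : Wfun n :=
  fun w => (f (w *m sref A i) - f w) / x (w *m alpha A i).

Definition Yop (n : nat) (A : 'M[int]_n) (x : 'cV[int]_n -> FracS n)
  (i : 'I_n) (f : Wfun n) : Wfun n :=
  fun w => f w / x (- (w *m alpha A i)) + f (w *m sref A i) / x (w *m alpha A i).

(* apply op_{i_l} ... op_{i_1} to f, for the word [:: i_1; ...; i_l] *)
Definition opword (n : nat) (op : 'I_n -> Wfun n -> Wfun n)
  (word : seq 'I_n) (f : Wfun n) : Wfun n :=
  foldl (fun g i => op i g) f word.

Definition zeta0 (n : nat) (x : 'cV[int]_n -> FracS n) (posl : seq 'cV[int]_n) : Wfun n :=
  fun w => if w == 1%:M then \prod_(a <- posl) x (- a) else 0.

Definition Aop (n : nat) (A : 'M[int]_n) (i : 'I_n) (f : Wfun n) : Wfun n :=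
  fun w => (f w - f (w *m sref A i)) / (- lamH (w *m alpha A i)).

Definition Dop (n : nat) (A : 'M[int]_n) (i : 'I_n) (f : Wfun n) : Wfun n :=
  fun w => (f w - expL (- (w *m alpha A i)) * f (w *m sref A i))
           / (1 - expL (- (w *m alpha A i))).

Definition KK_support (n : nat) (A : 'M[int]_n) (posl : seq 'cV[int]_n)
  (diag : 'cV[int]_n -> FracS n) (psi : 'M[int]_n -> Wfun n) : Prop :=
  (forall v w, inW A v -> inW A w -> ~ bruhat_le A v w -> psi v w = 0) /\
  (forall w, inW A w -> psi w w = \prod_(a <- inv_list posl w) diag a).

Definition KK_coh (n : nat) (A : 'M[int]_n) (posl : seq 'cV[int]_n)
  (psi : 'M[int]_n -> Wfun n) : Prop :=
  KK_support A posl (@lamH n) psi /\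
  (forall v i, inW A v ->
     (bruhat_lt A (v *m sref A i) v ->
        forall w, inW A w -> Aop A i (psi v) w = psi (v *m sref A i) w) /\
     (bruhat_lt A v (v *m sref A i) ->
        forall w, inW A w -> Aop A i (psi v) w = 0)).

Definition KK_K (n : nat) (A : 'M[int]_n) (posl : seq 'cV[int]_n)
  (psi : 'M[int]_n -> Wfun n) : Prop :=
  KK_support A posl (fun a => 1 - expL a) psi /\
  (forall v i, inW A v ->
     (bruhat_lt A (v *m sref A i) v ->
        forall w, inW A w -> Dop A i (psi v) w = psi v w + psi (v *m sref A i) w) /\
     (bruhat_lt A v (v *m sref A i) ->
        forall w, inW A w -> Dop A i (psi v) w = 0)).

Definition KK_xi (n : nat) (A : 'M[int]_n) (posl : seq 'cV[int]_n)
  (xi : 'M[int]_n -> Wfun n) : Prop :=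
  KK_support A posl (fun a => 1 - expL a) xi /\
  (forall v i, inW A v ->
     (bruhat_lt A (v *m sref A i) v ->
        forall w, inW A w -> Dop A i (xi v) w = xi (v *m sref A i) w) /\
     (bruhat_lt A v (v *m sref A i) ->
        forall w, inW A w -> Dop A i (xi v) w = xi v w)).

(* Main.v *)
Require Import Defs.
From HB Require Import structures.
From mathcomp Require Import all_boot all_order all_algebra.
From mathcomp Require Import ring lra zify.
From Stdlib Require Import ClassicalEpsilon.
Set Implicit Arguments. Unset Strict Implicit. Unset Printing Implicit Defensive.
Import Order.TTheory GRing.Theory Num.Theory.
Local Open Scope ring_scope.


Section Basics.
Variables (n : nat) (A : 'M[int]_n).

Lemma alphaE i k : alpha A i k 0 = A k i.
Proof. by rewrite /alpha mxE. Qed.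

Lemma srefE i (x : 'cV[int]_n) : sref A i *m x = x - (x i 0) *: alpha A i.
Proof.
rewrite /sref mulmxBl mul1mx -mulmxA.
have -> : delta_mx (0 : 'I_1) i *m x = (x i 0)%:M.
  by rewrite -rowE [LHS]mx11_scalar mxE.
by rewrite mul_mx_scalar.
Qed.

Lemma mx_ext (M N : 'M[int]_n) : (forall x : 'cV[int]_n, M *m x = N *m x) -> M = N.
Proof.
move=> h; apply/matrixP => a b.
have := congr1 (fun m : 'cV[int]_n => m a 0) (h (delta_mx b 0)).
by rewrite -!colE !mxE.
Qed.

Hypothesis hA : gen_cartan A.

Lemma sref_alpha i : sref A i *m alpha A i = - alpha A i.
Proof.
case: hA => h2 _ _.
rewrite srefE alphaE h2 scaler_nat; rewrite mulr2n; rewrite opprD addrA subrr sub0r //.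
Qed.

Lemma sref_alpha' i j : sref A i *m alpha A j = alpha A j - A i j *: alpha A i.
Proof. by rewrite srefE alphaE. Qed.

Lemma sref2 i : sref A i *m sref A i = 1%:M.
Proof.
apply: mx_ext => x; rewrite -mulmxA mul1mx (srefE i x) mulmxBr -scalemxAr sref_alpha srefE.
by rewrite scalerN opprK addrNK.
Qed.

Lemma sref_entry i p q : sref A i p q = (p == q)%:R - A p i * (i == q)%:R.
Proof. by rewrite /sref !mxE big_ord1 !mxE (eq_sym q). Qed.

Lemma det_sref i : \det (sref A i) = -1.
Proof.
case: hA => h2 _ _.
rewrite (expand_det_row _ i) (bigD1 i) //= big1 ?addr0; last first.
  move=> q hq; rewrite sref_entry eq_sym (negbTE hq) mulr0 subr0 mul0r //.
rewrite /cofactor.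
have -> : row' i (col' i (sref A i)) = 1%:M.
  apply/matrixP => p q; rewrite !mxE big_ord1 !mxE (inj_eq (@lift_inj _ i)).
  by rewrite (eq_sym (lift i q)) (negbTE (neq_lift i q)) andbF mulr0 subr0.
rewrite det1 mulr1 sref_entry eqxx h2 -signr_odd oddD addbb /= mulr1.
by [].
Qed.


Lemma prodw_cons i s : prodw A (i :: s) = sref A i *m prodw A s.
Proof. by []. Qed.

Lemma prodw_cat s t : prodw A (s ++ t) = prodw A s *m prodw A t.
Proof. by elim: s => [|i s IH] /=; rewrite ?mul1mx // IH mulmxA. Qed.

Lemma prodw_rcons s i : prodw A (rcons s i) = prodw A s *m sref A i.
Proof. by rewrite -cats1 prodw_cat /= mulmx1. Qed.

Lemma prodw_rev s : prodw A (rev s) *m prodw A s = 1%:M.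
Proof.
elim: s => [|i s IH]; first by rewrite /= mul1mx.
by rewrite rev_cons prodw_rcons prodw_cons -mulmxA (mulmxA (sref A i)) sref2 mul1mx.
Qed.

Lemma prodw_rev' s : prodw A s *m prodw A (rev s) = 1%:M.
Proof. by have := prodw_rev (rev s); rewrite revK. Qed.

Lemma det_prodw s : \det (prodw A s) = (-1) ^+ size s.
Proof.
elim: s => [|i s IH]; first by rewrite /= det1.
by rewrite prodw_cons det_mulmx det_sref IH /= exprS.
Qed.

Lemma inW1 : inW A 1%:M.
Proof. by exists [::]. Qed.

Lemma inW_mul x y : inW A x -> inW A y -> inW A (x *m y).
Proof. by move=> [s <-] [t <-]; exists (s ++ t); rewrite prodw_cat. Qed.

Lemma inW_sref i : inW A (sref A i).
Proof. by exists [:: i]; rewrite /= mulmx1. Qed.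

Lemma inW_inv x : inW A x -> exists y, [/\ inW A y, y *m x = 1%:M & x *m y = 1%:M].
Proof.
move=> [s <-]; exists (prodw A (rev s)); split; last by apply: prodw_rev'.
  by exists (rev s).
exact: prodw_rev.
Qed.

Lemma mulmx_cancel_r (x y z : 'M[int]_n) : inW A z -> x *m z = y *m z -> x = y.
Proof.
move=> /inW_inv [u [_ _ hu]] h.
by rewrite -(mulmx1 x) -hu mulmxA h -mulmxA hu mulmx1.
Qed.

Lemma mulmx_cancel_l (x y z : 'M[int]_n) : inW A z -> z *m x = z *m y -> x = y.
Proof.
move=> /inW_inv [u [_ hu _]] h.
by rewrite -(mul1mx x) -hu -mulmxA h mulmxA hu mul1mx.
Qed.

Definition pb (P : Prop) : bool := if excluded_middle_informative P then true else false.
Lemma pbP (P : Prop) : reflect P (pb P).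
Proof. rewrite /pb; case: excluded_middle_informative => h; by constructor. Qed.

Lemma cl_min (P : nat -> Prop) : (exists k, P k) -> exists k, P k /\ forall k', P k' -> (k <= k')%N.
Proof.
move=> h.
have h' : exists k, pb (P k) by case: h => k hk; exists k; apply/pbP.
case: (ex_minnP h') => k /pbP hk hmin; exists k; split => // k' hk'.
by apply: hmin; apply/pbP.
Qed.

Definition len (M : 'M[int]_n) : nat := epsilon (inhabits 0%N) (fun k => is_length A M k).

Lemma len_spec M : inW A M -> is_length A M (len M).
Proof.
move=> hM; rewrite /len; apply: epsilon_spec.
have hex : exists k, exists s, size s = k /\ prodw A s = M.
  by case: hM => s hs; exists (size s), s.
have [k [[s [hs hsM]] hmin]] := cl_min hex.
exists k; split; first by exists s.
by move=> word hw; apply: hmin; exists word.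
Qed.

Lemma len_le M s : prodw A s = M -> (len M <= size s)%N.
Proof. move=> h; have [_ h2] := len_spec (ex_intro _ s h); exact: h2. Qed.

Lemma len_word M : inW A M -> exists s, size s = len M /\ prodw A s = M.
Proof. by move=> /len_spec []. Qed.

Lemma len_is M k : is_length A M k -> len M = k.
Proof.
move=> [[s [hs hM]] hmin].
have hW : inW A M by exists s.
have [[t [ht hMt]] hmin'] := len_spec hW.
apply/eqP; rewrite eqn_leq; apply/andP; split.
  by rewrite -hs; apply: hmin'.
by rewrite -ht; apply: hmin.
Qed.

Lemma len0 M : inW A M -> len M = 0%N -> M = 1%:M.
Proof. by move=> /len_word [[|i s] [hs hM]] h0; [rewrite -hM | rewrite h0 in hs]. Qed.

Lemma len1 : len 1%:M = 0%N.
Proof. by have := len_le (s := [::]) erefl; case: (len _). Qed.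

Lemma len_mul x y : inW A x -> inW A y -> (len (x *m y) <= len x + len y)%N.
Proof.
move=> /len_word [s [hs hx]] /len_word [t [ht hy]].
by rewrite -hs -ht -hx -hy -prodw_cat -size_cat; apply: len_le.
Qed.

Lemma det_W M : inW A M -> \det M = (-1) ^+ len M.
Proof. by move=> /len_word [s [hs hx]]; rewrite -hx det_prodw hs hx. Qed.

Lemma len_sref M i : inW A M ->
  len (M *m sref A i) = (len M).+1 \/ len M = (len (M *m sref A i)).+1.
Proof.
move=> hM.
have hMs : inW A (M *m sref A i) by apply: inW_mul => //; apply: inW_sref.
have h1' : (len (M *m sref A i) <= (len M).+1)%N.
  have := len_mul hM (inW_sref i).
  have : (len (sref A i) <= 1)%N by apply: (len_le (s := [:: i])); rewrite /= mulmx1.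
  move=> a b; apply: leq_trans b _; by rewrite -addn1 leq_add2l.
have h2 : (len M <= (len (M *m sref A i)).+1)%N.
  have := len_mul hMs (inW_sref i); rewrite -mulmxA sref2 mulmx1.
  have : (len (sref A i) <= 1)%N by apply: (len_le (s := [:: i])); rewrite /= mulmx1.
  move=> a b; apply: leq_trans b _; by rewrite -addn1 leq_add2l.
have hd : \det (M *m sref A i) = - \det M by rewrite det_mulmx det_sref mulrN1.
rewrite (det_W hM) (det_W hMs) in hd.
have hne : len (M *m sref A i) != len M.
  apply/eqP => e; rewrite e in hd.
  move: hd; rewrite -signr_odd; case: (odd _) => /=; rewrite ?expr0 ?expr1 //.
lia.
Qed.

Lemma is_length_inW M k : is_length A M k -> inW A M.
Proof. by move=> [[s [_ h]] _]; exists s. Qed.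

Lemma len_lt_len u v : len_lt A u v -> (len u < len v)%N.
Proof. by move=> [k [k' [hu hv hk]]]; rewrite (len_is hu) (len_is hv). Qed.

Lemma len_lt_of u v : inW A u -> inW A v -> (len u < len v)%N -> len_lt A u v.
Proof. by move=> hu hv h; exists (len u), (len v); split => //; apply: len_spec. Qed.

Lemma bruhat_len u v : bruhat_le A u v -> u = v \/ (len u < len v)%N.
Proof.
elim=> [x _|x y t _ IH _ hl]; first by left.
right; have := len_lt_len hl; case: IH => [->|h] // h'.
exact: ltn_trans h h'.
Qed.

Lemma refl_sref i : is_reflection A (sref A i).
Proof.
exists 1%:M, 1%:M, i; split; try exact: inW1; first by rewrite mulmx1.
by rewrite mul1mx mulmx1.
Qed.

Lemma bruhat_lt_sref v i : inW A v -> (len v < len (v *m sref A i))%N ->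
  bruhat_lt A v (v *m sref A i).
Proof.
move=> hv hl; split.
  apply: bruhat_step; first exact: bruhat_refl.
    exact: refl_sref.
  by apply: len_lt_of => //; apply: inW_mul => //; apply: inW_sref.
by move=> e; rewrite -e ltnn in hl.
Qed.
End Basics.


Section Form.
Variables (n : nat) (A : 'M[int]_n).
Hypothesis hA : gen_cartan A.
Variable L : seq 'M[int]_n.
Hypothesis hL : forall M, inW A M -> M \in L.

Definition Wl := [seq M <- undup L | pb (inW A M)].

Lemma Wl_uniq : uniq Wl.
Proof. by rewrite filter_uniq // undup_uniq. Qed.

Lemma mem_Wl M : (M \in Wl) = pb (inW A M).
Proof.
rewrite mem_filter mem_undup; case: pbP => h //=.
exact: hL.
Qed.

Definition dot (x y : 'cV[int]_n) : int := \sum_k x k 0 * y k 0.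
Definition B (x y : 'cV[int]_n) : int := \sum_(w <- Wl) dot (w *m x) (w *m y).

Lemma dotC x y : dot x y = dot y x.
Proof. by apply: eq_bigr => k _; rewrite mulrC. Qed.
Lemma dotDl x y z : dot (x + y) z = dot x z + dot y z.
Proof. by rewrite /dot -big_split; apply: eq_bigr => k _; rewrite mxE mulrDl. Qed.
Lemma dotZl a x z : dot (a *: x) z = a * dot x z.
Proof. by rewrite /dot mulr_sumr; apply: eq_bigr => k _; rewrite mxE mulrA. Qed.
Lemma dot0l z : dot 0 z = 0.
Proof. by rewrite /dot big1 // => k _; rewrite mxE mul0r. Qed.

Lemma BC x y : B x y = B y x.
Proof. by apply: eq_bigr => w _; rewrite dotC. Qed.
Lemma BDl x y z : B (x + y) z = B x z + B y z.
Proof. by rewrite /B -big_split; apply: eq_bigr => w _; rewrite mulmxDr dotDl. Qed.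
Lemma BZl a x z : B (a *: x) z = a * B x z.
Proof. by rewrite /B mulr_sumr; apply: eq_bigr => w _; rewrite -scalemxAr dotZl. Qed.
Lemma B0l z : B 0 z = 0.
Proof. by rewrite /B big1 // => w _; rewrite mulmx0 dot0l. Qed.
Lemma BNl x z : B (- x) z = - B x z.
Proof. by rewrite -scaleN1r BZl mulN1r. Qed.
Lemma BBl x y z : B (x - y) z = B x z - B y z.
Proof. by rewrite BDl BNl. Qed.
Lemma BDr x y z : B z (x + y) = B z x + B z y.
Proof. by rewrite BC BDl !(BC z). Qed.
Lemma BZr a x z : B z (a *: x) = a * B z x.
Proof. by rewrite BC BZl BC. Qed.
Lemma BNr x z : B z (- x) = - B z x.
Proof. by rewrite BC BNl BC. Qed.
Lemma Bsuml (I : finType) (f : I -> 'cV[int]_n) z : B (\sum_i f i) z = \sum_i B (f i) z.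
Proof.
apply: (big_ind2 (fun a b => B a z = b)); first exact: B0l.
  by move=> a1 b1 a2 b2 <- <-; rewrite BDl.
by [].
Qed.
Lemma Bsumr (I : finType) (f : I -> 'cV[int]_n) z : B z (\sum_i f i) = \sum_i B z (f i).
Proof. by rewrite BC Bsuml; apply: eq_bigr => i _; rewrite BC. Qed.

Lemma B_inv u x y : inW A u -> B (u *m x) (u *m y) = B x y.
Proof.
move=> hu.
have hp : perm_eq [seq w *m u | w <- Wl] Wl.
  apply: uniq_perm; last 1 first.
  - move=> M; rewrite mem_Wl; apply/mapP/pbP.
      by case=> w; rewrite mem_Wl => /pbP hw ->; apply: inW_mul.
    move=> hM; have [v [hv hvu huv]] := inW_inv hA hu.
    exists (M *m v); first by rewrite mem_Wl; apply/pbP; apply: inW_mul.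
    by rewrite -mulmxA hvu mulmx1.
  - rewrite map_inj_in_uniq ?Wl_uniq // => a b _ _; exact: (mulmx_cancel_r hA hu).
  - exact: Wl_uniq.
rewrite /B -[RHS](perm_big _ hp) big_map; apply: eq_bigr => w _.
by rewrite !mulmxA.
Qed.

Lemma dot_ge0 x : 0 <= dot x x.
Proof. by apply: sumr_ge0 => k _; rewrite -expr2 sqr_ge0. Qed.

Lemma B_ge0 x : 0 <= B x x.
Proof. by apply: sumr_ge0 => w _; apply: dot_ge0. Qed.

Lemma B_def x : B x x <= 0 -> x = 0.
Proof.
move=> h.
have h1 : (1%:M : 'M[int]_n) \in Wl by rewrite mem_Wl; apply/pbP; apply: inW1.
have : dot x x <= 0.
  apply: le_trans h; rewrite /B (bigD1_seq _ h1 Wl_uniq) /= !mul1mx lerDl.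
  by apply: sumr_ge0 => w _; apply: dot_ge0.
move=> hd.
have hd0 : dot x x = 0 by apply/eqP; rewrite eq_le hd dot_ge0.
apply/matrixP => k j; rewrite ord1 mxE.
have hF : forall i, predT i -> 0 <= x i 0 * x i 0 by move=> i _; rewrite -expr2 sqr_ge0.
have := @psumr_eq0P _ _ predT (fun k => x k 0 * x k 0) hF hd0 k erefl.
by move/eqP; rewrite mulf_eq0 orbb => /eqP.
Qed.

Lemma B_coord (x : 'cV[int]_n) i : x i 0 * B (alpha A i) (alpha A i) = 2 * B x (alpha A i).
Proof.
have := B_inv x (alpha A i) (inW_sref A i).
rewrite srefE sref_alpha // BBl BZl !BNr => h.
lra.
Qed.

Lemma alpha_neq0 i : alpha A i != 0.
Proof.
case: hA => h2 _ _; apply/eqP => /matrixP /(_ i 0); rewrite alphaE h2 mxE.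
by [].
Qed.

Lemma Bii_pos i : 0 < B (alpha A i) (alpha A i).
Proof.
rewrite lt_def B_ge0 andbT; apply/eqP => h.
have h' : B (alpha A i) (alpha A i) <= 0 by rewrite -h.
have := B_def h' => /eqP; by rewrite (negbTE (alpha_neq0 i)).
Qed.

Lemma B_simple_le0 k l : k != l -> B (alpha A k) (alpha A l) <= 0.
Proof.
case: hA => _ hneg _ hkl.
have := B_coord (alpha A k) l; rewrite alphaE BC => h.
have hlk : A l k <= 0 by apply: hneg; rewrite eq_sym.
have hp := Bii_pos l.
nia.
Qed.

Definition rho : 'cV[int]_n := const_mx 1.

Lemma B_rho_pos i : 0 < B rho (alpha A i).
Proof.
have := B_coord rho i; rewrite mxE mul1r => h.
have := Bii_pos i; lia.
Qed.

Lemma IND (c : 'I_n -> int) : \sum_k c k *: alpha A k = 0 -> forall k, c k = 0.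
Proof.
move=> hsum.
pose cp k := if 0 <= c k then c k else 0; pose cn k := if 0 <= c k then 0 else - c k.
have hcp k : 0 <= cp k by rewrite /cp; case: ifP.
have hcn k : 0 <= cn k by rewrite /cn; case: ifP => // /negbT; rewrite -ltNge oppr_ge0 => /ltW.
have hc k : c k = cp k - cn k by rewrite /cp /cn; case: ifP; rewrite ?subr0 ?sub0r ?opprK.
have hpn k : cp k * cn k = 0 by rewrite /cp /cn; case: ifP; rewrite ?mulr0 ?mul0r.
pose P := \sum_k cp k *: alpha A k; pose N := \sum_k cn k *: alpha A k.
have hPN : P = N.
  have : P - N = \sum_k c k *: alpha A k.
    by rewrite /P /N -sumrB; apply: eq_bigr => k _; rewrite hc scalerBl.
  by rewrite hsum => /eqP; rewrite subr_eq0 => /eqP.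
have BPP : B P P <= 0.
  rewrite {2}hPN /P /N Bsuml; apply: sumr_le0 => k _.
  rewrite BZl Bsumr mulr_sumr; apply: sumr_le0 => l _.
  rewrite BZr mulrA.
  case: (eqVneq k l) => [<-|hkl]; first by rewrite hpn mul0r.
  apply: mulr_ge0_le0; first by apply: mulr_ge0.
  exact: B_simple_le0.
have P0 : P = 0 by apply: B_def.
have hz : forall (d : 'I_n -> int), (forall k, 0 <= d k) ->
    \sum_k d k *: alpha A k = 0 -> forall k, d k = 0.
  move=> d hd h0 k.
  have : B rho (\sum_k d k *: alpha A k) = 0 by rewrite h0 BC B0l.
  rewrite Bsumr => hs.
  have hF : forall i, predT i -> 0 <= B rho (d i *: alpha A i).
    by move=> i _; rewrite BZr mulr_ge0 // ltW // B_rho_pos.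
  have := @psumr_eq0P _ _ predT _ hF hs k erefl.
  move=> /eqP; rewrite BZr mulf_eq0 (gt_eqF (B_rho_pos k)) orbF => /eqP //.
move=> k; rewrite hc (hz cp hcp P0 k) (hz cn hcn _ k) ?subr0 //.
by rewrite -/N -hPN.
Qed.

Definition pos (x : 'cV[int]_n) := exists c : 'I_n -> nat, x = \sum_k (c k)%:Z *: alpha A k.

Lemma NB x : pos x -> pos (- x) -> x = 0.
Proof.
move=> [c hc] [d hd].
have h0 : \sum_k ((c k)%:Z + (d k)%:Z) *: alpha A k = 0.
  under eq_bigr do rewrite scalerDl.
  by rewrite big_split /= -hc -hd subrr.
have := IND h0 => hk.
rewrite hc big1 // => k _.
have := hk k; move=> /eqP; rewrite -PoszD => /eqP [].
by move=> /eqP; rewrite addn_eq0 => /andP [/eqP -> _]; rewrite scale0r.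
Qed.
End Form.


Section Pos.
Variables (n : nat) (A : 'M[int]_n).

Lemma pos0 : pos A 0.
Proof. by exists (fun _ => 0%N); rewrite big1 // => k _; rewrite scale0r. Qed.

Lemma pos_alpha i : pos A (alpha A i).
Proof.
exists (fun k => (k == i) : nat); rewrite (bigD1 i) //= eqxx scale1r big1 ?addr0 //.
by move=> k /negbTE ->; rewrite scale0r.
Qed.

Lemma posD x y : pos A x -> pos A y -> pos A (x + y).
Proof.
move=> [c ->] [d ->]; exists (fun k => (c k + d k)%N).
by rewrite -big_split; apply: eq_bigr => k _; rewrite PoszD scalerDl.
Qed.

Lemma posZ (m : nat) x : pos A x -> pos A (m%:Z *: x).
Proof.
move=> [c ->]; exists (fun k => (m * c k)%N).
rewrite scaler_sumr; apply: eq_bigr => k _; by rewrite scalerA PoszM.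
Qed.

Lemma posZ' (z : int) x : 0 <= z -> pos A x -> pos A (z *: x).
Proof. by move=> hz; rewrite -(gez0_abs hz); apply: posZ. Qed.

Lemma pos_lin (w : 'M[int]_n) x : (forall k, pos A (w *m alpha A k)) -> pos A x -> pos A (w *m x).
Proof.
move=> hk [c ->]; rewrite mulmx_sumr.
apply: (big_ind (pos A)); [exact: pos0 | exact: posD | ].
by move=> k _; rewrite -scalemxAr; apply: posZ.
Qed.
End Pos.

Section Rank2.
Variables (n : nat) (A : 'M[int]_n).
Hypothesis hA : gen_cartan A.
Variables (i i' : 'I_n).

Definition lt (l : bool) := if l then i' else i.

Fixpoint wb (e : bool) (k : nat) : seq bool :=
  match k with 0 => [::] | k'.+1 => (if odd k then e else ~~ e) :: wb e k' end.

Fixpoint coef (a b : int) (k : nat) : int * int :=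
  match k with
  | 0 => (1, 0)
  | k'.+1 => let: (x, y) := coef a b k' in
             if odd k then (x, b * x - y) else (a * y - x, y)
  end.

Let a := - A i i'.
Let b := - A i' i.

Lemma coefE k : prodw A (map lt (wb true k)) *m alpha A i =
  (coef a b k).1 *: alpha A i + (coef a b k).2 *: alpha A i'.
Proof.
elim: k => [|k IH]; first by rewrite /= mul1mx scale1r scale0r addr0.
rewrite /= -mulmxA IH /=; case: (coef a b k) => x y /=.
rewrite mulmxDr -!scalemxAr.
case: (odd k) => /=; rewrite ?sref_alpha // ?sref_alpha' /a /b;
  apply/matrixP => p q; rewrite !mxE; ring.
Qed.

Definition stepC (a b : int) (l : bool) (C : int * int * int * int) :=
  let: (c1, c2, c3, c4) := C in
  if l then (c1, c2, b * c1 - c3, -1 + b * c2 - c4)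
  else (-1 - c1 + a * c3, - c2 + a * c4, c3, c4).

Definition Cw (a b : int) (w : seq bool) := foldr (stepC a b) (0, 0, 0, 0) w.

Definition Tm (C : int * int * int * int) (x : 'cV[int]_n) :=
  let: (c1, c2, c3, c4) := C in
  x + (c1 * x i 0 + c2 * x i' 0) *: alpha A i + (c3 * x i 0 + c4 * x i' 0) *: alpha A i'.

Lemma CwE w x : prodw A (map lt w) *m x = Tm (Cw a b w) x.
Proof.
case: hA => h2 _ _.
elim: w => [|l w IH]; first by rewrite /= mul1mx !mul0r !addr0 !scale0r !addr0.
rewrite /= -mulmxA IH /=; case: (Cw a b w) => [[[c1 c2] c3] c4] /=.
case: l => /=; rewrite srefE; apply/matrixP => p q; rewrite !mxE !h2 /a /b; ring.
Qed.

Lemma braid m : Cw a b (wb true m) = Cw a b (wb false m) ->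
  prodw A (map lt (wb true m)) = prodw A (map lt (wb false m)).
Proof. by move=> h; apply: mx_ext => x; rewrite !CwE h. Qed.

Lemma size_wb e k : size (wb e k) = k.
Proof. by elim: k => //= k ->. Qed.

Lemma drop_wb e d m : drop d (wb e (d + m)) = wb e m.
Proof. by elim: d => [|d IH]; rewrite ?drop0 //= addSn /= drop0 IH. Qed.

Lemma wb_last e m : exists t, wb e m.+1 = rcons t e.
Proof.
elim: m => [|m [t IH]]; first by exists [::].
exists ((if odd m.+2 then e else ~~ e) :: t).
by rewrite rcons_cons -IH.
Qed.

Lemma coef_nat k : 0 <= (coef a b k).1 -> 0 <= (coef a b k).2 ->
  exists x y : nat, prodw A (map lt (wb true k)) *m alpha A i = x%:Z *: alpha A i + y%:Z *: alpha A i'.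
Proof.
move=> h1 h2; exists `|(coef a b k).1|%N, `|(coef a b k).2|%N.
by rewrite !gez0_abs // coefE.
Qed.

Lemma fin_case (an bn : nat) m k : (0 < m)%N -> a = an -> b = bn ->
  Cw an bn (wb true m) = Cw an bn (wb false m) ->
  all (fun k => (0 <= (coef an bn k).1) && (0 <= (coef an bn k).2)) (iota 0 m) ->
  (forall s s0, size s = k -> prodw A s = prodw A (map lt (wb true k)) -> s <> rcons s0 i) ->
  exists x y : nat, prodw A (map lt (wb true k)) *m alpha A i = x%:Z *: alpha A i + y%:Z *: alpha A i'.
Proof.
move=> hm ha hb hbr hall hno.
case: (ltnP k m) => hk.
  have := allP hall k; rewrite mem_iota add0n hk => /(_ isT) /andP [c1 c2].
  by apply: coef_nat; rewrite ha hb.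
exfalso.
have hb' := braid; rewrite ha hb in hb'; have {}hb' := hb' m hbr.
pose d := (k - m)%N.
have hkd : k = (d + m)%N by rewrite /d subnK.
have hsplit : wb true k = take d (wb true k) ++ wb true m.
  by rewrite -[in RHS](drop_wb true d m) -hkd cat_take_drop.
case: m hm hbr hall hb' d hkd hsplit hk => // m _ _ _ hb' d hkd hsplit _.
have [t ht] := wb_last false m.
apply: (hno (map lt (take d (wb true k) ++ wb false m.+1))
          (map lt (take d (wb true k) ++ t))).
- by rewrite size_map size_cat size_take size_wb hkd size_wb; case: ifP => //; lia.
- by rewrite {2}hsplit !map_cat !prodw_cat hb'.
- by rewrite ht -rcons_cat map_rcons.
Qed.

Lemma coef_inv (an bn : int) : 1 <= bn -> 4 <= an * bn -> 0 <= an -> forall k,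
  let: (x, y) := coef an bn k in
  if odd k then [/\ 0 <= y, y <= bn * x & bn * x <= 2 * y]
  else 0 <= y /\ 2 * y <= bn * x.
Proof.
move=> hb hab ha; elim=> [|k IH] /=; first by split => //; lia.
move: IH; case: (coef an bn k) => x y; case: (odd k) => /=.
  by case=> h1 h2 h3; split; nia.
by case=> h1 h2; split; nia.
Qed.

Lemma rank2 k : i != i' ->
  (forall s s0, size s = k -> prodw A s = prodw A (map lt (wb true k)) -> s <> rcons s0 i) ->
  exists x y : nat, prodw A (map lt (wb true k)) *m alpha A i = x%:Z *: alpha A i + y%:Z *: alpha A i'.
Proof.
move=> hii hno.
case: hA => _ hneg hsym.
have ha0 : 0 <= a by rewrite /a oppr_ge0; apply: hneg.
have hb0 : 0 <= b by rewrite /b oppr_ge0; apply: hneg; rewrite eq_sym.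
have ha : a = (`|a|%N)%:Z by rewrite gez0_abs.
have hb : b = (`|b|%N)%:Z by rewrite gez0_abs.
have hab0 : a = 0 -> b = 0.
  by move=> h; rewrite /b (hsym i i') ?oppr0 //; apply/eqP; rewrite -oppr_eq0 -/a h.
have hba0 : b = 0 -> a = 0.
  by move=> h; rewrite /a (hsym i' i) ?oppr0 //; apply/eqP; rewrite -oppr_eq0 -/b h.
move: ha hb hab0 hba0; set an := `|a|%N; set bn := `|b|%N => ha hb hab0 hba0.
case: (leqP 4 (an * bn)) => hbig.
  have hb1 : (1 <= bn)%N by case: bn hbig {hb hab0 hba0} => //; rewrite muln0.
  have s1 : 1 <= bn%:Z by lia.
  have s2 : 4 <= an%:Z * bn%:Z by rewrite -PoszM; lia.
  have s3 : 0 <= an%:Z by [].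
  have := coef_inv s1 s2 s3 k.
  rewrite -ha -hb; case E: (coef a b k) => [x y] /= H.
  have : 0 <= x /\ 0 <= y.
    move: H; rewrite hb; case: (odd k).
      by case=> h1 h2 h3; split; nia.
    by case=> h1 h2; split; nia.
  by move=> [hx hy]; apply: coef_nat; rewrite E.
case: an ha hab0 hbig => [|[|[|[|an]]]] ha hab0 hbig.
- have hb' : b = 0 by apply: hab0.
  apply: (fin_case (an := 0) (bn := 0) (m := 2)) => //; by rewrite ?ha ?hb'.
- case: bn hb hba0 hbig => [|[|[|[|bn]]]] hb hba0 hbig //; try lia; try (by have := hba0 hb; rewrite ha).
  + by apply: (fin_case (an := 1) (bn := 1) (m := 3)).
  + by apply: (fin_case (an := 1) (bn := 2) (m := 4)).
  + by apply: (fin_case (an := 1) (bn := 3) (m := 6)).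
- case: bn hb hba0 hbig => [|[|[|[|bn]]]] hb hba0 hbig //; try lia; try (by have := hba0 hb; rewrite ha).
  + by apply: (fin_case (an := 2) (bn := 1) (m := 4)).
- case: bn hb hba0 hbig => [|[|[|[|bn]]]] hb hba0 hbig //; try lia; try (by have := hba0 hb; rewrite ha).
  + by apply: (fin_case (an := 3) (bn := 1) (m := 6)).
- case: bn hb hba0 hbig => [|[|[|[|bn]]]] hb hba0 hbig //; try lia; try (by have := hba0 hb; rewrite ha).
Qed.
End Rank2.

Section KT.
Variables (n : nat) (A : 'M[int]_n).
Hypothesis hA : gen_cartan A.

Lemma alt_struct (i i' : 'I_n) t : i != i' -> all (fun l => (l == i) || (l == i')) t ->
  (forall t1 t2 l, t <> t1 ++ l :: l :: t2) -> (forall t0, t <> rcons t0 i) ->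
  t = map (lt i i') (wb true (size t)).
Proof.
move=> hii; elim: t => [|l t IH] //= /andP [hl hall] hadj hend.
have IH' : t = map (lt i i') (wb true (size t)).
  apply: IH => //.
    by move=> t1 t2 l0 e; apply: (hadj (l :: t1) t2 l0); rewrite e.
  by move=> t0 e; apply: (hend (l :: t0)); rewrite e.
clear IH.
case: t IH' hadj hend hall => [|l' t] IH' hadj hend hall.
  case/orP: hl => /eqP e; last by rewrite e.
  by exfalso; apply: (hend [::]); rewrite e.
have hll : l != l' by apply/eqP => e; apply: (hadj [::] t l); rewrite e.
move: IH'; rewrite [size _]/= => IH'; rewrite IH'.
move: IH' hll => /= [-> _]; rewrite negbK.
case: (odd (size t)) => /=; rewrite /lt /= => hne; congr (_ :: _);
  case/orP: hl => /eqP e //; by rewrite e eqxx in hne.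
Qed.

Theorem Kthm_aux m : forall w i, (len A w <= m)%N -> inW A w ->
  (len A w < len A (w *m sref A i))%N -> pos A (w *m alpha A i).
Proof.
elim: m => [|m IH] w i hlen hw hl.
  have -> : w = 1%:M by apply: (len0 hw); lia.
  by rewrite mul1mx; apply: pos_alpha.
case: (posnP (len A w)) => hw0.
  by rewrite (len0 hw hw0) mul1mx; apply: pos_alpha.
have [s [hs hws]] := len_word hw.
case/lastP: s hs hws => [|s0 i'] hs hws; first by rewrite -hs in hw0.
rewrite size_rcons in hs.
have hw' : w *m sref A i' = prodw A s0.
  by rewrite -hws prodw_rcons -mulmxA sref2 // mulmx1.
have hii : i != i'.
  apply/eqP => e; rewrite -e in hw'.
  have := len_le (esym hw'); lia.
have hws' : inW A (w *m sref A i') by apply: inW_mul => //; apply: inW_sref.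
have hl' : (len A (w *m sref A i')).+1 = len A w.
  have := len_le (esym hw'); case: (len_sref hA i' hw); lia.
pose Q k := exists v t, [/\ inW A v, all (fun l => (l == i) || (l == i')) t,
   v *m prodw A t = w, (len A v + size t)%N = len A w & len A v = k].
have hQ : exists k, Q k by exists (len A w), w, [::]; split => //; rewrite ?mulmx1 ?addn0.
have [k [[v [t [hv hall hvt hsum hk]]] hmin]] := cl_min hQ.
have hkw : (k < len A w)%N.
  have := hmin (len A (w *m sref A i')); rewrite -hl'; apply.
  exists (w *m sref A i'), [:: i']; split => //=.
  - by rewrite eqxx orbT.
  - by rewrite mulmx1 -mulmxA sref2 // mulmx1.
  - by rewrite addn1.
have hasc : forall j, (j == i) || (j == i') -> (len A v < len A (v *m sref A j))%N.
  move=> j hj; case: (len_sref hA j hv) => h; first by rewrite h.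
  exfalso.
  have : (k <= len A (v *m sref A j))%N.
    apply: hmin; exists (v *m sref A j), (j :: t); split => //=.
    - by apply: inW_mul => //; apply: inW_sref.
    - by rewrite hj.
    - by rewrite -mulmxA (mulmxA (sref A j)) sref2 // mul1mx.
    - by rewrite -hsum h addSn addnS.
  lia.
have hvi : pos A (v *m alpha A i).
  apply: IH => //; first lia.
  by apply: hasc; rewrite eqxx.
have hvi' : pos A (v *m alpha A i').
  apply: IH => //; first lia.
  by apply: hasc; rewrite eqxx orbT.
have hadj : forall t1 t2 l, t <> t1 ++ l :: l :: t2.
  move=> t1 t2 l e.
  have hp : prodw A t = prodw A (t1 ++ t2).
    by rewrite e !prodw_cat !prodw_cons (mulmxA (sref A l)) sref2 // mul1mx.
  have h1 := len_mul (inW_mul hv (ex_intro _ _ erefl)) (inW1 A).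
  have h2 : (len A w <= len A v + size (t1 ++ t2))%N.
    rewrite -hvt hp; apply: leq_trans (len_mul hv (ex_intro _ (t1 ++ t2) erefl)) _.
    by rewrite leq_add2l; apply: len_le.
  move: h2; rewrite -hsum e !size_cat /=; lia.
have hno : forall s s0, size s = size t -> prodw A s = prodw A t -> s <> rcons s0 i.
  move=> s s1 hsz hp e.
  have : w *m sref A i = v *m prodw A s1.
    by rewrite -hvt -hp e prodw_rcons !mulmxA -(mulmxA _ (sref A i)) sref2 // mulmx1.
  move=> hwi.
  have : (len A (w *m sref A i) <= len A v + size s1)%N.
    rewrite hwi; apply: leq_trans (len_mul hv (ex_intro _ s1 erefl)) _.
    by rewrite leq_add2l; apply: len_le.
  have : size s = (size s1).+1 by rewrite e size_rcons.
  lia.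
have ht : t = map (lt i i') (wb true (size t)).
  by apply: alt_struct => // t0 e; apply: (hno t t0).
have [x [y hxy]] : exists x y : nat, prodw A (map (lt i i') (wb true (size t))) *m alpha A i
   = x%:Z *: alpha A i + y%:Z *: alpha A i'.
  apply: rank2 => // s1 s2 hsz hp; apply: hno => //.
  by rewrite hp -ht.
rewrite -hvt -mulmxA -ht in hxy *; rewrite hxy mulmxDr -!scalemxAr.
by apply: posD; apply: posZ.
Qed.

Theorem Kthm w i : inW A w -> (len A w < len A (w *m sref A i))%N -> pos A (w *m alpha A i).
Proof. exact: (Kthm_aux (leqnn _)). Qed.
End KT.


Section W0.
Variables (n : nat) (A : 'M[int]_n).
Hypothesis hA : gen_cartan A.
Variable L : seq 'M[int]_n.
Hypothesis hL : forall M, inW A M -> M \in L.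

Lemma Kneg w i : inW A w -> (len A (w *m sref A i) < len A w)%N -> pos A (- (w *m alpha A i)).
Proof.
move=> hw hl.
have hws : inW A (w *m sref A i) by apply: inW_mul => //; apply: inW_sref.
have := @Kthm _ _ hA (w *m sref A i) i hws.
rewrite -mulmxA sref2 // mulmx1 => /(_ hl).
by rewrite -mulmxA sref_alpha // mulmxN.
Qed.

Lemma root_neq0 w i : inW A w -> w *m alpha A i != 0.
Proof.
move=> hw; have [u [_ hu _]] := inW_inv hA hw.
apply/eqP => h; have := congr1 (mulmx u) h.
rewrite mulmxA hu mul1mx mulmx0 => /eqP; by rewrite (negbTE (alpha_neq0 hA i)).
Qed.

Lemma not_both w i : inW A w -> pos A (w *m alpha A i) -> pos A (- (w *m alpha A i)) -> False.
Proof. by move=> hw h1 h2; have := NB hA hL h1 h2; apply/eqP; apply: root_neq0. Qed.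

Lemma pos_asc w i : inW A w -> pos A (w *m alpha A i) -> (len A w < len A (w *m sref A i))%N.
Proof.
move=> hw hp; case: (len_sref hA i hw) => h; first by rewrite h.
exfalso; apply: (not_both hw hp); apply: Kneg => //; by rewrite h.
Qed.

Lemma neg_desc w i : inW A w -> pos A (- (w *m alpha A i)) -> (len A (w *m sref A i) < len A w)%N.
Proof.
move=> hw hp; case: (len_sref hA i hw) => h; last by rewrite h.
exfalso; apply: (not_both hw _ hp); apply: (Kthm hA) => //; by rewrite h.
Qed.

Lemma dichot w i : inW A w -> pos A (w *m alpha A i) \/ pos A (- (w *m alpha A i)).
Proof.
move=> hw; case: (len_sref hA i hw) => h.
  by left; apply: (Kthm hA) => //; rewrite h.
by right; apply: Kneg => //; rewrite h.
Qed.

Lemma allpos_id u : inW A u -> (forall k, pos A (u *m alpha A k)) -> u = 1%:M.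
Proof.
move=> hu hk; case: (posnP (len A u)) => h0; first exact: (len0 hu).
have [s [hs hus]] := len_word hu.
case/lastP: s hs hus => [|s0 k] hs hus; first by rewrite -hs in h0.
exfalso; apply: (not_both hu (hk k)); apply: Kneg => //.
have : u *m sref A k = prodw A s0 by rewrite -hus prodw_rcons -mulmxA sref2 // mulmx1.
move=> e; have := len_le (esym e); rewrite -hs size_rcons; lia.
Qed.

Lemma pos_neg_lin (w : 'M[int]_n) x : (forall k, pos A (- (w *m alpha A k))) -> pos A x -> pos A (- (w *m x)).
Proof.
move=> hk hx; rewrite -mulNmx; apply: pos_lin => // k; by rewrite mulNmx.
Qed.

Variable w0 : 'M[int]_n.
Hypothesis hw0 : is_longest A w0.

Lemma w0W : inW A w0.
Proof. by case: hw0. Qed.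

Lemma w0_desc i : (len A (w0 *m sref A i) < len A w0)%N.
Proof.
have hws : inW A (w0 *m sref A i) by apply: inW_mul; [exact: w0W | apply: inW_sref].
have hle : (len A (w0 *m sref A i) <= len A w0)%N.
  by case: hw0 => hW h; apply: (h _ _ _ hws (len_spec hws) (len_spec hW)).
case: (len_sref hA i w0W) => h; last by rewrite h.
by rewrite h ltnn in hle.
Qed.

Lemma w0_neg i : pos A (- (w0 *m alpha A i)).
Proof. by apply: Kneg; [exact: w0W | exact: w0_desc]. Qed.

Lemma w0_sq : w0 *m w0 = 1%:M.
Proof.
apply: allpos_id; first by apply: inW_mul; exact: w0W.
move=> k; rewrite -mulmxA.
have [c hc] := w0_neg k.
have -> : w0 *m alpha A k = - \sum_l (c l)%:Z *: alpha A l by rewrite -hc opprK.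
rewrite mulmxN; apply: pos_neg_lin; first exact: w0_neg.
by exists c.
Qed.

Lemma coef_eq (c d : 'I_n -> int) : \sum_l c l *: alpha A l = \sum_l d l *: alpha A l ->
  forall l, c l = d l.
Proof.
move=> h l; apply/eqP; rewrite -subr_eq0; apply/eqP.
apply: (IND hA hL (c := fun l => c l - d l)) => /=.
under eq_bigr do rewrite scalerBl.
by rewrite sumrB h subrr.
Qed.

Lemma alpha_sum k : alpha A k = \sum_l ((l == k)%:R : int) *: alpha A l.
Proof.
rewrite (bigD1 k) //= eqxx scale1r big1 ?addr0 //.
by move=> l /negbTE ->; rewrite scale0r.
Qed.

Lemma w0_simple j : exists i, w0 *m alpha A j = - alpha A i.
Proof.
case: hA => h2 _ _.
pose u := sref A j *m w0.
have hu : inW A u by apply: inW_mul; [apply: inW_sref | exact: w0W].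
have hne : u <> w0.
  move=> e.
  have hs : sref A j = 1%:M.
    by apply: (mulmx_cancel_r hA w0W); rewrite mul1mx.
  have := sref_alpha hA j; rewrite hs mul1mx => /matrixP /(_ j 0).
  by rewrite !mxE h2.
have [k hk] : exists k, pos A (u *m alpha A k).
  case: (excluded_middle_informative (exists k, pos A (u *m alpha A k))) => // hno.
  exfalso; apply: hne.
  have hneg : forall k, pos A (- (u *m alpha A k)).
    move=> k; case: (dichot k hu) => // h; by exfalso; apply: hno; exists k.
  have hz : u *m w0 = 1%:M.
    apply: allpos_id; first by apply: inW_mul => //; exact: w0W.
    move=> k; have [c hc] := w0_neg k.
    have -> : u *m w0 *m alpha A k = - (u *m \sum_l (c l)%:Z *: alpha A l).
      by rewrite -hc -mulmxA mulmxN opprK.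
    by apply: pos_neg_lin => //; exists c.
  by rewrite -[u]mulmx1 -w0_sq mulmxA hz mul1mx.
have [c hc] := w0_neg k.
set p := - (w0 *m alpha A k) in hc.
have hk' : pos A (- (sref A j *m p)).
  by move: hk; rewrite /u -mulmxA /p mulmxN opprK.
have [d hd] := hk'.
have hsum : \sum_l ((c l)%:Z + (d l)%:Z) *: alpha A l = \sum_l ((l == j)%:R * p j 0) *: alpha A l.
  under eq_bigr do rewrite scalerDl.
  rewrite big_split /= -hc -hd srefE opprB addrCA subrr addr0.
  rewrite (bigD1 j) //= eqxx mul1r big1 ?addr0 //.
  by move=> l /negbTE ->; rewrite mul0r scale0r.
have hcl : forall l, l != j -> c l = 0%N.
  move=> l hl; have := coef_eq hsum l; rewrite (negbTE hl) mul0r => /eqP.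
  by rewrite -PoszD => /eqP [] /eqP; rewrite addn_eq0 => /andP [/eqP].
have hp : p = (c j)%:Z *: alpha A j.
  rewrite hc (bigD1 j) //= big1 ?addr0 //.
  by move=> l hl; rewrite hcl // scale0r.
have [e he] := w0_neg j.
have hak : alpha A k = \sum_l ((c j)%:Z * (e l)%:Z) *: alpha A l.
  have : alpha A k = w0 *m (w0 *m alpha A k) by rewrite mulmxA w0_sq mul1mx.
  rewrite -[w0 *m alpha A k]opprK -/p hp mulmxN -scalemxAr -scalerN he => ->.
  by rewrite scaler_sumr; apply: eq_bigr => l _; rewrite scalerA.
have := coef_eq (etrans (esym (alpha_sum k)) hak) k.
rewrite eqxx -PoszM => /eqP; rewrite eqz_nat => /eqP /esym /eqP; rewrite muln_eq1 => /andP [/eqP hcj _].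
exists k.
have hwk : w0 *m alpha A k = - alpha A j by rewrite -[w0 *m alpha A k]opprK -/p hp hcj scale1r.
have : w0 *m (w0 *m alpha A k) = alpha A k by rewrite mulmxA w0_sq mul1mx.
by rewrite hwk mulmxN => <-; rewrite opprK.
Qed.

Lemma w0_refl j i : w0 *m alpha A j = - alpha A i -> w0 *m sref A j *m w0 = sref A i.
Proof.
move=> hj.
have hi : w0 *m alpha A i = - alpha A j.
  have : w0 *m (w0 *m alpha A j) = alpha A j by rewrite mulmxA w0_sq mul1mx.
  by rewrite hj mulmxN => <-; rewrite opprK.
have key : forall x : 'cV[int]_n, (w0 *m x) j 0 = - x i 0.
  move=> x.
  have h1 := B_coord hA hL (w0 *m x) j.
  have h2 := B_coord hA hL x i.
  have ha : alpha A j = - (w0 *m alpha A i) by rewrite hi opprK.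
  have e1 : B A L (w0 *m x) (alpha A j) = - B A L x (alpha A i).
    by rewrite ha BNr B_inv //; exact: w0W.
  have e2 : B A L (alpha A j) (alpha A j) = B A L (alpha A i) (alpha A i).
    by rewrite ha BNr BNl opprK B_inv //; exact: w0W.
  rewrite e1 e2 in h1.
  have hB := Bii_pos hA hL i.
  apply: (mulIf (x := B A L (alpha A i) (alpha A i))); first by rewrite gt_eqF.
  by rewrite h1 mulNr h2 mulrN.
apply: mx_ext => x.
rewrite -!mulmxA (srefE _ j) mulmxBr -scalemxAr hj (mulmxA w0 w0) w0_sq mul1mx key.
by rewrite srefE scalerN scaleNr opprK.
Qed.
End W0.


Lemma tvar_neq0 k (i : nat) : (i < k)%N -> tvar k i != 0.
Proof.
elim: k i => [|k IH] i //= hi.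
case: ifP => [_|/negbT hne]; first by rewrite polyX_eq0.
rewrite polyC_eq0; apply: IH; lia.
Qed.

Lemma mono_inj k (p q : 'I_k -> nat) :
  \prod_(i < k) tvar k i ^+ p i = \prod_(i < k) tvar k i ^+ q i -> forall i, p i = q i.
Proof.
elim: k p q => [|k IH] p q; first by move=> _ [].
rewrite !big_ord_recr /=.
have hw : forall (r : 'I_k.+1 -> nat), \prod_(i < k) (if (widen_ord (leqnSn k) i : nat) == k
   then ('X : {poly mpoly k}) else (tvar k (widen_ord (leqnSn k) i))%:P) ^+ r (widen_ord (leqnSn k) i)
   = (\prod_(i < k) tvar k i ^+ r (widen_ord (leqnSn k) i))%:P.
  move=> r; rewrite rmorph_prod; apply: eq_bigr => i _ /=.
  by rewrite (ltn_eqF (ltn_ord i)) rmorphXn.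
rewrite !hw eqxx => h.
set Mp := \prod_(i < k) _ in h; set Mq := \prod_(i < k) _ in h.
have hMp : Mp != 0.
  by apply/prodf_neq0 => i _; rewrite expf_neq0 // tvar_neq0.
have hc := congr1 (fun P : {poly mpoly k} => P`_(p ord_max)) h.
rewrite /= !coefCM !coefXn eqxx mulr1 in hc.
have hpq : p ord_max = q ord_max.
  by apply/eqP; apply: contraTT hMp => hne; rewrite negbK hc (negbTE hne) mulr0.
rewrite hpq eqxx mulr1 in hc.
have := IH (fun i => p (widen_ord (leqnSn k) i)) (fun i => q (widen_ord (leqnSn k) i)) hc.
move=> hrest i.
case: (unliftP ord_max i) => [j ->|->] //.
have -> : lift ord_max j = widen_ord (leqnSn k) j by apply: val_inj; rewrite /= /bump leqNgt ltn_ord.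
exact: hrest.
Qed.

Section ExpL.
Variable n : nat.

Lemma tF_neq0 (i : 'I_n) : tF i != 0.
Proof. by rewrite /tF tofrac_eq0 tvar_neq0. Qed.

Lemma expL_neq0 (l : 'cV[int]_n) : expL l != 0.
Proof. by apply/prodf_neq0 => i _; apply: expfz_neq0; apply: tF_neq0. Qed.

Lemma expL_add (x y : 'cV[int]_n) : expL (x + y) = expL x * expL y.
Proof.
by rewrite /expL -big_split; apply: eq_bigr => i _; rewrite mxE expfzDr // tF_neq0.
Qed.

Lemma expL0 : expL (0 : 'cV[int]_n) = 1.
Proof. by rewrite /expL big1 // => i _; rewrite mxE expr0z. Qed.

Lemma expL_opp (l : 'cV[int]_n) : expL (- l) = (expL l)^-1.
Proof.
apply: (mulIf (expL_neq0 l)); rewrite -expL_add addNr expL0 mulVf //.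
exact: expL_neq0.
Qed.

Lemma expL_eq1 (l : 'cV[int]_n) : expL l = 1 -> l = 0.
Proof.
move=> h.
pose pn (i : 'I_n) : nat := if 0 <= l i ord0 then `|l i ord0|%N else 0%N.
pose qn (i : 'I_n) : nat := if 0 <= l i ord0 then 0%N else `|l i ord0|%N.
have hl : forall i, tF i ^ (l i ord0) = tF i ^+ pn i * (tF i ^+ qn i)^-1.
  move=> i; rewrite /pn /qn; case: ifP => hle.
    by rewrite expr0 invr1 mulr1 -{1}(gez0_abs hle).
  rewrite expr0 mul1r; set m := `|l i ord0|%N.
  have -> : l i ord0 = - m%:Z by rewrite /m ltz0_abs ?opprK // ltNge hle.
  by rewrite -exprnN.
have : \prod_(i < n) tF i ^+ pn i = \prod_(i < n) tF i ^+ qn i.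
  move: h; rewrite /expL (eq_bigr _ (fun i _ => hl i)) big_split /= prodfV => h.
  apply: (mulIf (x := (\prod_(i < n) tF i ^+ qn i)^-1)).
    by rewrite invr_eq0; apply/prodf_neq0 => i _; rewrite expf_neq0 // tF_neq0.
  by rewrite h mulfV //; apply/prodf_neq0 => i _; rewrite expf_neq0 // tF_neq0.
rewrite /tF.
have e : forall r : 'I_n -> nat, \prod_(i < n) (FracField.tofrac (tvar n i)) ^+ r i
    = FracField.tofrac (\prod_(i < n) tvar n i ^+ r i).
  by move=> r; rewrite rmorph_prod; apply: eq_bigr => i _; rewrite rmorphXn.
rewrite !e => /eqP; rewrite tofrac_eq => /eqP /mono_inj hpq.
apply/matrixP => i j; rewrite ord1 mxE.
have := hpq i; rewrite /pn /qn; case: ifP => hle.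
  by move=> /eqP; rewrite absz_eq0 => /eqP.
by move=> /esym /eqP; rewrite absz_eq0 => /eqP.
Qed.

Lemma lamH_opp (l : 'cV[int]_n) : lamH (- l) = - lamH l.
Proof. by rewrite /lamH -sumrN; apply: eq_bigr => i _; rewrite mxE mulrNz mulNr. Qed.
End ExpL.


Section Main.
Variables (n : nat) (A : 'M[int]_n).
Hypothesis hA : gen_cartan A.
Variable L : seq 'M[int]_n.
Hypothesis hL : forall M, inW A M -> M \in L.
Variable posl : seq 'cV[int]_n.
Hypothesis hposl : enum_pos A posl.
Variable w0 : 'M[int]_n.
Hypothesis hw0 : is_longest A w0.

Let hW0 := w0W hw0.
Let hsq := w0_sq hA hL hw0.

Lemma inv_list_w0 : inv_list posl w0 = posl.
Proof.
apply/all_filterP/allP => a ha; apply/hasP.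
have [hu hmem] := hposl.
have [[u [l [hu' hal]]] hpa] := (hmem a).1 ha.
exists (- (w0 *m a)); last by rewrite mulmxN mulmxA hsq mul1mx.
apply/hmem; split.
  exists (w0 *m u *m sref A l), l; split.
    by apply: inW_mul; [apply: inW_mul | apply: inW_sref].
  by rewrite -mulmxA sref_alpha // mulmxN hal mulmxA.
have := pos_neg_lin (w := w0) (x := a) (w0_neg hA hw0) hpa.
by [].
Qed.

Lemma max_w0 w : inW A w -> w != w0 -> ~ bruhat_le A w0 w.
Proof.
move=> hw hne hb; case: (bruhat_len hb) => [e|hl]; first by rewrite e eqxx in hne.
case: hw0 => _ h.
have := h w _ _ hw (len_spec hw) (len_spec hW0); lia.
Qed.

Lemma main_gen (op : 'I_n -> Wfun n -> Wfun n) (xx diag : 'cV[int]_n -> FracS n)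
  (psi : 'M[int]_n -> Wfun n) :
  KK_support A posl diag psi ->
  \prod_(a <- posl) xx (- a) = \prod_(a <- posl) diag a ->
  (forall v' i j (f : Wfun n), inW A v' -> w0 *m alpha A j = - alpha A i ->
     sref A i *m w0 = w0 *m sref A j ->
     bruhat_lt A (v' *m sref A i) v' ->
     (forall w, inW A w -> f (w *m w0) = psi v' w) ->
     forall w, inW A w -> op j f (w *m w0) = psi (v' *m sref A i) w) ->
  forall word v w, inW A v -> inW A w -> reduced_word A word (v *m w0) ->
     opword op word (zeta0 xx posl) (w *m w0) = psi v w.
Proof.
move=> [hsupp hdiag] hprod hstep word.
elim/last_ind: word => [|word j IH] v w hv hw [hred hmin].
  have hvw0 : v = w0 by apply: (mulmx_cancel_r hA hW0); rewrite -hred hsq.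
  rewrite /opword /= /zeta0 hvw0.
  case: (eqVneq w w0) => [->|hne].
    by rewrite hsq eqxx hprod (hdiag _ hW0) inv_list_w0.
  have -> : (w *m w0 == 1%:M) = false.
    apply/negbTE; apply: contra hne => /eqP e.
    by rewrite -[w]mulmx1 -hsq mulmxA e mul1mx.
  by rewrite hsupp //; apply: max_w0.
have [i hji] := w0_simple hA hL hw0 j.
have hrefl := w0_refl hA hL hw0 hji.
have hsw : sref A i *m w0 = w0 *m sref A j.
  by rewrite -hrefl -!mulmxA hsq mulmx1.
set v' := v *m sref A i.
have hv' : inW A v' by apply: inW_mul => //; apply: inW_sref.
have hv'w0 : v' *m w0 = prodw A word.
  by rewrite /v' -mulmxA hsw mulmxA -hred prodw_rcons -mulmxA sref2 // mulmx1.
have hred' : reduced_word A word (v' *m w0).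
  split => // word'' h''.
  have e : prodw A (rcons word'' j) = v *m w0 by rewrite prodw_rcons h'' hv'w0 -prodw_rcons hred.
  have := hmin _ e; rewrite !size_rcons; lia.
have IH' := fun w hw => IH v' w hv' hw hred'.
rewrite /opword foldl_rcons -/(opword op word (zeta0 xx posl)).
have hv's : v' *m sref A i = v by rewrite /v' -mulmxA sref2 // mulmx1.
rewrite -hv's.
apply: hstep => //.
rewrite hv's.
have hu : inW A (v *m w0) by apply: inW_mul.
have hlen_u : len A (v *m w0) = (size word).+1.
  by rewrite (len_is (conj (ex_intro _ (rcons word j) (conj erefl hred)) hmin)) size_rcons.
have hus : v *m w0 *m sref A j = v' *m w0 by rewrite /v' -!mulmxA hsw.
have hlu : (len A (v *m w0 *m sref A j) < len A (v *m w0))%N.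
  by rewrite hus hlen_u ltnS; apply: len_le (esym hv'w0).
have hneg := Kneg hA hu hlu.
rewrite -mulmxA hji mulmxN opprK in hneg.
apply: bruhat_lt_sref => //.
exact: (pos_asc hA hL hv hneg).
Qed.
End Main.


Lemma fid1 (K : fieldType) (E F F' : K) : E != 0 -> 1 - E != 0 ->
  (F' - F) / (1 - E) = (F - E^-1 * F') / (1 - E^-1) - F.
Proof.
move=> h0 h1.
have h2 : E - 1 != 0 by rewrite -oppr_eq0 opprB.
field. by rewrite h0 h2.
Qed.

Lemma fid2 (K : fieldType) (E F F' : K) : E != 0 -> 1 - E != 0 ->
  F / (1 - E^-1) + F' / (1 - E) = (F - E^-1 * F') / (1 - E^-1).
Proof.
move=> h0 h1.
have h2 : E - 1 != 0 by rewrite -oppr_eq0 opprB.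
field. by rewrite h0 h2.
Qed.

Theorem proposition5p1 (n : nat) (A : 'M[int]_n)
  (hA : gen_cartan A) (hfin : weyl_finite A)
  (posl : seq 'cV[int]_n) (hposl : enum_pos A posl)
  (w0 : 'M[int]_n) (hw0 : is_longest A w0) :
  (* (1) ordinary cohomology *)
  (forall psi, KK_coh A posl psi ->
     forall v w word, inW A v -> inW A w -> reduced_word A word (v *m w0) ->
       opword (Xop A (@xH n)) word (zeta0 (@xH n) posl) (w *m w0) = psi v w) /\
  (* (1) K-theory *)
  (forall psi, KK_K A posl psi ->
     forall v w word, inW A v -> inW A w -> reduced_word A word (v *m w0) ->
       opword (Xop A (@xK n)) word (zeta0 (@xK n) posl) (w *m w0) = psi v w) /\
  (* (2) K-theory *)
  (forall xi, KK_xi A posl xi ->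
     forall v w word, inW A v -> inW A w -> reduced_word A word (v *m w0) ->
       opword (Yop A (@xK n)) word (zeta0 (@xK n) posl) (w *m w0) = xi v w).
Proof.
case: hfin => L hL0.
have hL : forall M, inW A M -> M \in L by move=> M hM; apply: hL0.
have hcomm : forall (i j : 'I_n) (w : 'M[int]_n), sref A i *m w0 = w0 *m sref A j ->
    w *m w0 *m sref A j = (w *m sref A i) *m w0.
  by move=> i j w hsw; rewrite -!mulmxA hsw.
have hroot : forall (i j : 'I_n) (w : 'M[int]_n), w0 *m alpha A j = - alpha A i ->
    w *m w0 *m alpha A j = - (w *m alpha A i).
  by move=> i j w hji; rewrite -mulmxA hji mulmxN.
have hE : forall (i : 'I_n) (w : 'M[int]_n), inW A w ->
    expL (- (w *m alpha A i)) != 0 /\ expL (- (w *m alpha A i)) != 1.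
  move=> i w hw; split; first exact: expL_neq0.
  apply/eqP => /expL_eq1 /eqP; rewrite oppr_eq0 => /eqP h.
  by have := root_neq0 hA i hw; rewrite h eqxx.
split; [|split].
- move=> psi [hsupp hH2] v w word hv hw hred.
  apply: (main_gen hA hL hposl hw0 hsupp) => //.
    by apply: eq_bigr => a _; rewrite /xH lamH_opp !opprK.
  move=> v' i j f hv' hji hsw hbr hf w1 hw1.
  rewrite -((hH2 v' i hv').1 hbr w1 hw1) /Xop /Aop.
  rewrite (hcomm i j w1 hsw) hf; last by apply: inW_mul => //; apply: inW_sref.
  rewrite hf // (hroot i j w1 hji) /xH lamH_opp opprK.
  by rewrite invrN mulrN -mulNr opprB.
- move=> psi [hsupp hK2] v w word hv hw hred.
  apply: (main_gen hA hL hposl hw0 hsupp) => //.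
    by apply: eq_bigr => a _; rewrite /xK !opprK.
  move=> v' i j f hv' hji hsw hbr hf w1 hw1.
  have h := (hK2 v' i hv').1 hbr w1 hw1.
  have -> : psi (v' *m sref A i) w1 = Dop A i (psi v') w1 - psi v' w1 by rewrite h addrC addKr.
  rewrite /Xop /Dop.
  rewrite (hcomm i j w1 hsw) hf; last by apply: inW_mul => //; apply: inW_sref.
  rewrite hf // (hroot i j w1 hji) /xK opprK.
  have [hE0 hE1] := hE i w1 hw1.
  move: hE0 hE1; rewrite -[w1 *m alpha A i]opprK expL_opp opprK.
  set E := expL _ => hE0 hE1.
  have hE0' : E != 0 by rewrite invr_eq0 in hE0.
  have hE1' : 1 - E != 0 by rewrite subr_eq0 eq_sym; apply: contra hE1 => /eqP ->; rewrite invr1.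
  exact: fid1.
- move=> xi [hsupp hK2] v w word hv hw hred.
  apply: (main_gen hA hL hposl hw0 hsupp) => //.
    by apply: eq_bigr => a _; rewrite /xK !opprK.
  move=> v' i j f hv' hji hsw hbr hf w1 hw1.
  rewrite -((hK2 v' i hv').1 hbr w1 hw1).
  rewrite /Yop /Dop.
  have hws : inW A (w1 *m sref A i) by apply: inW_mul => //; apply: inW_sref.
  rewrite (hcomm i j w1 hsw) (hf _ hws) (hf _ hw1) (hroot i j w1 hji) /xK !opprK.
  have [hE0 hE1] := hE i w1 hw1.
  move: hE0 hE1; rewrite -[w1 *m alpha A i]opprK expL_opp opprK.
  set E := expL _ => hE0 hE1.
  have hE0' : E != 0 by rewrite invr_eq0 in hE0.
  have hE1' : 1 - E != 0 by rewrite subr_eq0 eq_sym; apply: contra hE1 => /eqP ->; rewrite invr1.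
  exact: fid2.
Qed.
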